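(* Let $G$ and $H$ be connected graphs of order at least two such that neither $G$ nor $H$ is a complete graph. If $\textnormal{diam}(G\diamond H)=2$, then $O_{\rm SR}(G\diamond H)=\mathcal{B}$.
   Context: All graphs are finite, simple and undirected; $\overline{X}$ denotes the complement of $X$; $\textnormal{diam}$ denotes diameter. The modular product $G\diamond H$ has vertex set $V(G)\times V(H)$, and $(g,h)$, $(g',h')$ are adjacent iff one of the following holds: ($g=g'$ and $hh'\in E(H)$), or ($h=h'$ and $gg'\in E(G)$), or ($gg'\in E(G)$ and $hh'\in E(H)$), or ($gg'\in E(\overline{G})$ and $hh'\in E(\overline{H})$). A set $S\subseteq V(X)$ is a strong resolving set of a connected graph $X$ if for all distinct $x,y\in V(X)$ there exists $z\in S$ such that $x$ lies on a $y$–$z$ geodesic or $y$ lies on an $x$–$z$ geodesic. The Maker–Breaker strong resolving game on $X$: Maker and Breaker alternately select a not-yet-chosen vertex of $X$; Maker wins if the vertices he selects contain a strong resolving set of $X$, Breaker wins otherwise. In the M-game Maker moves first, in the B-game Breaker moves first. $O_{\rm SR}(X)=\mathcal{M}$ if Maker has a winning strategy in both games, $\mathcal{B}$ if Breaker has a winning strategy in both, and $\mathcal{N}$ if the first player has a winning strategy in each. *)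

(* Defs.v *)
From mathcomp Require Import all_boot.
Set Implicit Arguments. Unset Strict Implicit. Unset Printing Implicit Defensive.

Definition simple_graph (V : finType) (e : rel V) : Prop :=
  symmetric e /\ irreflexive e.

Definition connected_graph (V : finType) (e : rel V) : Prop :=
  forall x y : V, connect e x y.

Definition complete_graph (V : finType) (e : rel V) : Prop :=
  forall x y : V, x != y -> e x y.

Definition nball (V : finType) (e : rel V) (x : V) (k : nat) : {set V} :=
  iter k (fun S : {set V} => S :|: [set y | [exists z in S, e z y]]) [set x].

(* Graph distance: least k with y within k steps of x (for connected graphs
   this is < #|V|, so the search range iota 0 #|V| suffices). *)
Definition dist (V : finType) (e : rel V) (x y : V) : nat :=
  find (fun k => y \in nball e x k) (iota 0 #|V|).

Definition diam (V : finType) (e : rel V) : nat :=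
  \max_(p : V * V) dist e p.1 p.2.

Definition modular_product (V W : finType) (eG : rel V) (eH : rel W)
  : rel (V * W) :=
  fun p q =>
    [|| (p.1 == q.1) && eH p.2 q.2,
        (p.2 == q.2) && eG p.1 q.1,
        eG p.1 q.1 && eH p.2 q.2
      | [&& p.1 != q.1, ~~ eG p.1 q.1, p.2 != q.2 & ~~ eH p.2 q.2]].

Definition on_geodesic (V : finType) (e : rel V) (y x z : V) : Prop :=
  dist e y x + dist e x z = dist e y z.

Definition strong_resolving_set (V : finType) (e : rel V) (S : {set V}) : Prop :=
  forall x y : V, x != y ->
    exists2 z, z \in S & (on_geodesic e y x z \/ on_geodesic e x y z).

Definition contains_srs (V : finType) (e : rel V) (M : {set V}) : Prop :=
  exists2 S : {set V}, S \subset M & strong_resolving_set e S.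

(* The fuel n is
   at least the number of free vertices (#|V| suffices from the start). *)
Fixpoint maker_wins (V : finType) (e : rel V) (n : nat)
    (M B : {set V}) (maker_turn : bool) : Prop :=
  match n with
  | 0 => contains_srs e M
  | n'.+1 =>
    if ~: (M :|: B) == set0 then contains_srs e M
    else if maker_turn then
      exists2 v, v \in ~: (M :|: B) & maker_wins e n' (v |: M) B false
    else forall v, v \in ~: (M :|: B) -> maker_wins e n' M (v |: B) true
  end.

Fixpoint breaker_wins (V : finType) (e : rel V) (n : nat)
    (M B : {set V}) (maker_turn : bool) : Prop :=
  match n with
  | 0 => ~ contains_srs e M
  | n'.+1 =>
    if ~: (M :|: B) == set0 then ~ contains_srs e M
    else if maker_turn then
      forall v, v \in ~: (M :|: B) -> breaker_wins e n' (v |: M) B false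
    else exists2 v, v \in ~: (M :|: B) & breaker_wins e n' M (v |: B) true
  end.

Definition breaker_wins_M_game (V : finType) (e : rel V) : Prop :=
  breaker_wins e #|V| set0 set0 true.
Definition breaker_wins_B_game (V : finType) (e : rel V) : Prop :=
  breaker_wins e #|V| set0 set0 false.

Definition outcome_SR_is_B (V : finType) (e : rel V) : Prop :=
  breaker_wins_M_game e /\ breaker_wins_B_game e.

(* Main.v *)
Require Import Defs.
From mathcomp Require Import all_boot.
From mathcomp Require Import zify.

Section Gen.
Variable T : finType.
Variable e : rel T.
Hypothesis hdiam : diam e <= 2.
Hypothesis hcard : 1 < #|T|.

Definition bad (x y : T) := [&& x != y, ~~ e x y & ~~ e y x].

Lemma bad_sym x y : bad x y -> bad y x.
Proof. by case/and3P => ? ? ?; rewrite /bad eq_sym; apply/and3P. Qed.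

Lemma dist_le z w : dist e z w <= 2.
Proof. apply: leq_trans hdiam; rewrite /diam; exact: (leq_bigmax (z, w)). Qed.

Lemma dist_pos x z : z != x -> 1 <= dist e x z.
Proof.
move=> nz; rewrite /dist.
have := hcard; case E: #|T| => [|k] // _.
rewrite /= /nball /= in_set1 (negbTE nz) //.
Qed.

Lemma dist_ge2 x y : bad x y -> 2 <= dist e x y.
Proof.
case/and3P => nxy nexy _; rewrite /dist.
have := hcard; case E: #|T| => [|[|k]] // _.
rewrite /= /nball /= in_set1 eq_sym (negbTE nxy) /= in_setU in_set1 eq_sym (negbTE nxy) /=.
rewrite inE; case: existsP => //= [[z /andP [] ]].
by rewrite in_set1 => /eqP -> ; rewrite (negbTE nexy).
Qed.

Lemma L0 (M : {set T}) x y : x \notin M -> y \notin M -> bad x y -> ~ contains_srs e M.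
Proof.
move=> xM yM bxy [S sub srs].
have nxy : x != y by case/and3P: bxy.
have [z zS [h|h]] := srs x y nxy; have zM := subsetP sub z zS.
- have zx : z != x by apply/eqP => E; rewrite -E zM in xM.
  have := dist_pos _ _ zx; have := dist_ge2 _ _ (bad_sym _ _ bxy); have := dist_le y z.
  rewrite /on_geodesic in h; lia.
- have zy : z != y by apply/eqP => E; rewrite -E zM in yM.
  have := dist_pos _ _ zy; have := dist_ge2 _ _ bxy; have := dist_le x z.
  rewrite /on_geodesic in h; lia.
Qed.

Lemma L1 x y (bxy : bad x y) n : forall (M B : {set T}) t, x \notin M -> y \notin M -> x \in B -> y \in B ->
  breaker_wins e n M B t.
Proof.
elim: n => [|n IH] M B t xM yM xB yB /=; first exact: (L0 _ _ _ xM yM bxy).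
case: ifP => H0; first exact: (L0 _ _ _ xM yM bxy).
case: t.
- move=> v; rewrite in_setC in_setU negb_or => /andP [vM vB].
  apply: IH => //; rewrite in_setU1 negb_or ?xM ?yM andbT; apply/eqP => E; subst v.
  + by rewrite xB in vB.
  + by rewrite yB in vB.
- have [v vf] := set0Pn _ (negbT H0); exists v => //.
  by apply: IH => //; rewrite in_setU1 ?xB ?yB orbT.
Qed.

Lemma freeP (w : T) (M B : {set T}) : (w \in ~: (M :|: B)) = (w \notin M) && (w \notin B).
Proof. by rewrite in_setC in_setU negb_or. Qed.

Lemma L2 (v x y : T) n (M B : {set T}) : v \in B -> v \notin M -> x \in ~: (M :|: B) -> y \in ~: (M :|: B) ->
  x != y -> bad v x -> bad v y -> 2 <= n -> breaker_wins e n M B true.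
Proof.
move=> vB vM xf yf nxy bx bY.
case: n => [|[|n]] // _ /=.
have -> : (~: (M :|: B) == set0) = false by apply/negbTE/set0Pn; exists x.
move=> w wf.
set x' := if w == x then y else x.
have x'f : x' \in ~: ((w |: M) :|: B).
  move: xf yf wf; rewrite /x' !freeP !in_setU1 !negb_or.
  case: (eqVneq w x) => [->|wx] /andP [xM xB] /andP [yM yB] _ /=.
  - by rewrite eq_sym nxy yM yB.
  - by rewrite eq_sym wx xM xB.
have -> : (~: ((w |: M) :|: B) == set0) = false by apply/negbTE/set0Pn; exists x'.
exists x' => //.
have bx' : bad v x' by rewrite /x'; case: ifP.
move: x'f; rewrite freeP => /andP [x'M x'B].
apply: (L1 _ _ bx') => //; rewrite ?in_setU1 ?eqxx ?vB ?orbT //.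
rewrite negb_or vM andbT; apply/eqP => E; subst w.
by move: wf; rewrite freeP vB andbF.
Qed.

Lemma L3 (a b d : T) n (M B : {set T}) : a \in ~: (M :|: B) -> b \in ~: (M :|: B) -> d \in ~: (M :|: B) ->
  b != d -> bad a b -> bad a d -> 3 <= n -> breaker_wins e n M B false.
Proof.
move=> af bf df nbd bb bd.
case: n => [|n] // hn /=.
have -> : (~: (M :|: B) == set0) = false by apply/negbTE/set0Pn; exists a.
exists a => //.
move: af; rewrite freeP => /andP [aM aB].
have ab : a != b by case/and3P: bb.
have ad : a != d by case/and3P: bd.
apply: (L2 a b d) => //.
- by rewrite in_setU1 eqxx.
- by move: bf; rewrite !freeP in_setU1 negb_or eq_sym ab.
- by move: df; rewrite !freeP in_setU1 negb_or eq_sym ad.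
Qed.

End Gen.

Theorem mainTheorem17 (V W : finType) (eG : rel V) (eH : rel W) :
  simple_graph eG -> simple_graph eH ->
  connected_graph eG -> connected_graph eH ->
  1 < #|V| -> 1 < #|W| ->
  ~ complete_graph eG -> ~ complete_graph eH ->
  diam (modular_product eG eH) = 2 ->
  outcome_SR_is_B (modular_product eG eH).
Proof.
move=> [sG iG] [sH iH] _ _ cV cW nG nH hd.
have : ~~ [forall x, forall y, (x != y) ==> eG x y].
  apply/negP => /forallP H; apply: nG => x y; move/forallP: (H x) => H'; exact: (implyP (H' y)).
move/forallPn => [g1 /forallPn [g2]]; rewrite negb_imply => /andP [ng12 eg12].
have eg21 : eG g2 g1 = false by rewrite sG; apply/negbTE.
have : ~~ [forall x, forall y, (x != y) ==> eH x y].
  apply/negP => /forallP H; apply: nH => x y; move/forallP: (H x) => H'; exact: (implyP (H' y)).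
move/forallPn => [h1 /forallPn [h2]]; rewrite negb_imply => /andP [nh12 eh12].
have eh21 : eH h2 h1 = false by rewrite sH; apply/negbTE.
have eg12' : eG g1 g2 = false by apply/negbTE.
have eh12' : eH h1 h2 = false by apply/negbTE.
set e := modular_product eG eH.
have hdiam : diam e <= 2 by rewrite /e hd.
have hc : 4 <= #|{: V * W}|.
  rewrite card_prod; have := leq_mul cV cW; by [].
have hcard : 1 < #|{: V * W}| by apply: leq_trans hc.
pose a := (g1, h1); pose b := (g2, h1); pose c := (g2, h2); pose d := (g1, h2).
have ng21 : g2 != g1 by rewrite eq_sym.
have nh21 : h2 != h1 by rewrite eq_sym.
have bab : bad _ e a b.
  by rewrite /bad /e /modular_product /= xpair_eqE ng12 eqxx ?eg12' ?eg21 ?iH ?iG ?andbF ?andbT ?orbF.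
have bad' : bad _ e a d.
  by rewrite /bad /e /modular_product /= xpair_eqE nh12 eqxx ?eh12' ?eh21 ?iH ?iG ?andbF ?andbT ?orbF.
have bcb : bad _ e c b.
  by rewrite /bad /e /modular_product /= xpair_eqE nh21 eqxx ?eh12' ?eh21 ?iH ?iG ?andbF ?andbT ?orbF.
have bcd : bad _ e c d.
  by rewrite /bad /e /modular_product /= xpair_eqE ng21 eqxx ?eg12' ?eg21 ?iH ?iG ?andbF ?andbT ?orbF.
have nbd : b != d by rewrite /b /d xpair_eqE (negbTE ng21).
have nac : a != c by rewrite /a /c xpair_eqE (negbTE ng12).
have free0 : forall w : V * W, w \in ~: ((set0 : {set V * W}) :|: set0) by move=> w; rewrite !inE.
split.
- rewrite /breaker_wins_M_game.
  case E: #|_| => [|n]; first by rewrite E in hc.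
  rewrite /=.
  have -> : (~: ((set0 : {set V * W}) :|: set0) == set0) = false
    by apply/negbTE/set0Pn; exists a.
  move=> u _.
  have fr : forall w, w != u -> w \in ~: ((u |: set0) :|: set0).
    by move=> w wu; rewrite !inE !orbF.
  have hn : 3 <= n by rewrite E in hc.
  have nab : a != b by case/and3P: bab.
  have nad : a != d by case/and3P: bad'.
  have ncb : c != b by case/and3P: bcb.
  have ncd : c != d by case/and3P: bcd.
  case: (eqVneq u a) => [Eu|ua].
    subst u; apply: (@L3 _ e hdiam hcard c b d) => //; try solve [ apply: fr => //; by rewrite eq_sym | by rewrite eq_sym | by apply: bad_sym ].
  case: (eqVneq u b) => [Eu|ub].
    subst u; apply: (@L3 _ e hdiam hcard d a c) => //; try solve [ apply: fr => //; by rewrite eq_sym | by rewrite eq_sym | by apply: bad_sym ].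
  case: (eqVneq u c) => [Eu|uc].
    subst u; apply: (@L3 _ e hdiam hcard a b d) => //; try solve [ apply: fr => //; by rewrite eq_sym | by rewrite eq_sym | by apply: bad_sym ].
  apply: (@L3 _ e hdiam hcard b a c) => //; try solve [ apply: fr => //; by rewrite eq_sym | by rewrite eq_sym | by apply: bad_sym ].
- rewrite /breaker_wins_B_game.
  apply: (@L3 _ e hdiam hcard a b d) => //.
  by apply: leq_trans hc.
Qed.
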